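(* In the MUPIR setting with $S = N+U-1$ sources and $K$ messages, for every integer $S \ge 1$ and every $\theta\in[K]$, the message $W_\theta$ can be retrieved while maintaining privacy from all $S$ sources, and the rate $R$ of such private retrieval satisfies $$R \le \Big(1 + \frac{1}{S} + \cdots + \frac{1}{S^{K-1}}\Big)^{-1}.$$
   Context: Setting (MUPIR): $N$ replicated, non-communicating databases each store the same $K$ independent messages $W_1,\dots,W_K$ of $L$ bits each ($H(W_k)=L$). A central user wishes to retrieve $W_\theta$ with help of $U-1$ other users; the $S=N+U-1$ sources are the $N$ databases and the $U-1$ other users. The central user sends a query $Q^{[\theta]}_s$ to each source $s\in[S]$ and receives an answer $A^{[\theta]}_s$ (queries to users are forwarded by them to a database and the answer is relayed back). Queries are independent of messages: $I(Q^{[k]}_{1:S};W_{1:K})=0$ for all $k$. Privacy: for every source $s$ and every $k\in[K]$, $(Q^{[1]}_s,A^{[1]}_s,W_{1:K})$ and $(Q^{[k]}_s,A^{[k]}_s,W_{1:K})$ are identically distributed. Correctness: $W_\theta$ is recoverable from all answers and queries. The rate is $R=L/D=H(W_\theta)/\big(S\,H(A^{[\theta]}_1\mid Q^{[\theta]}_{1:S})\big)$, with $D$ the total number of downloaded bits. *)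

(* Defs.v *)
From HB Require Import structures.
From mathcomp Require Import all_boot all_order all_algebra.
From mathcomp Require Import all_classical all_reals exp.
Set Implicit Arguments. Unset Strict Implicit. Unset Printing Implicit Defensive.
Import Order.TTheory GRing.Theory Num.Theory.
Local Open Scope ring_scope.

Section InfoTheory.
Variables (R : realType) (Omega : finType).

Definition is_prob (P : Omega -> R) : Prop :=
  (forall w, 0 <= P w) /\ \sum_(w : Omega) P w = 1.

Definition pr (P : Omega -> R) (A : finType) (X : Omega -> A) (a : A) : R :=
  \sum_(w : Omega | X w == a) P w.

Definition log2 (x : R) : R := ln x / ln 2.

Definition entropy (P : Omega -> R) (A : finType) (X : Omega -> A) : R :=
  - \sum_(a : A | 0 < pr P X a) pr P X a * log2 (pr P X a).

Definition cond_entropy (P : Omega -> R) (A B : finType)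
  (X : Omega -> A) (Y : Omega -> B) : R :=
  entropy P (fun w => (X w, Y w)) - entropy P Y.

Definition mutual_info (P : Omega -> R) (A B : finType)
  (X : Omega -> A) (Y : Omega -> B) : R :=
  entropy P X + entropy P Y - entropy P (fun w => (X w, Y w)).

Definition same_dist (P : Omega -> R) (A : finType) (X Y : Omega -> A) : Prop :=
  forall a, pr P X a = pr P Y a.

End InfoTheory.

Definition messages_ok (R : realType) (Omega : finType) (P : Omega -> R)
  (K L : nat) (W : Omega -> {ffun 'I_K -> L.-tuple bool}) : Prop :=
  is_prob P /\
  (forall k : 'I_K, entropy P (fun w => W w k) = L%:R) /\
  (forall m : {ffun 'I_K -> L.-tuple bool},
     pr P W m = \prod_(k < K) pr P (fun w => W w k) (m k)).

(* A MUPIR scheme with S sources: for each desired index k and source s,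
   a query Q k w s and an answer A k w s. *)
Definition mupir_scheme (R : realType) (Omega : finType) (P : Omega -> R)
  (K L S : nat) (W : Omega -> {ffun 'I_K -> L.-tuple bool})
  (QT AT : finType)
  (Q : 'I_K -> Omega -> {ffun 'I_S -> QT})
  (A : 'I_K -> Omega -> {ffun 'I_S -> AT}) : Prop :=
  (* answers are generated (by a database, possibly relayed by a user)
     from the query sent to that source and the stored messages *)
  (exists ans : 'I_S -> QT -> {ffun 'I_K -> L.-tuple bool} -> AT,
     forall k w s, A k w s = ans s (Q k w s) (W w)) /\
  (forall k, mutual_info P (Q k) W = 0) /\
  (* privacy against every single source *)
  (forall (s : 'I_S) (k k' : 'I_K),
     same_dist P (fun w => (Q k w s, A k w s, W w))
                 (fun w => (Q k' w s, A k' w s, W w))) /\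
  (forall k : 'I_K,
     cond_entropy P (fun w => W w k) (fun w => (A k w, Q k w)) = 0).

(* rate L / D for desired message theta, D = total downloaded bits
   = sum over sources of H(A_s | Q_{1:S}) *)
Definition mupir_rate (R : realType) (Omega : finType) (P : Omega -> R)
  (K L S : nat) (QT AT : finType)
  (Q : 'I_K -> Omega -> {ffun 'I_S -> QT})
  (A : 'I_K -> Omega -> {ffun 'I_S -> AT}) (theta : 'I_K) : R :=
  L%:R / \sum_(s < S) cond_entropy P (fun w => A theta w s) (Q theta).

(* Main.v *)
Set Warnings "-notation-overridden,-ambiguous-paths,-notation-incompatible-prefix".
Require Import Defs.
From HB Require Import structures.
From mathcomp Require Import all_boot all_order all_algebra.
From mathcomp Require Import all_classical all_reals exp.
From mathcomp Require Import lra zify.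
Import Order.TTheory GRing.Theory Num.Theory.
Local Open Scope ring_scope.
Set Implicit Arguments. Unset Strict Implicit. Unset Printing Implicit Defensive.
Section Basic.
Variables (R : realType) (Omega : finType) (P : Omega -> R).
Hypothesis HP : is_prob P.

Lemma P_ge0 w : 0 <= P w. Proof. exact: HP.1. Qed.

Lemma pr_indic (A : finType) (X : Omega -> A) a :
  pr P X a = \sum_w P w * (X w == a)%:R.
Proof.
rewrite /pr big_mkcond; apply: eq_bigr => w _.
by case: eqP => _; rewrite ?mulr1 ?mulr0.
Qed.

Lemma sum_ind (A : finType) (a0 : A) (k : R) :
  \sum_a (a0 == a)%:R * k = k.
Proof.
rewrite (bigD1 a0) //= eqxx mul1r big1 ?addr0 // => a /negbTE.
by rewrite eq_sym => ->; rewrite mul0r.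
Qed.

Lemma fiber (A : finType) (X : Omega -> A) (h : A -> R) :
  \sum_a pr P X a * h a = \sum_w P w * h (X w).
Proof.
under eq_bigr do rewrite pr_indic mulr_suml.
rewrite exchange_big /=; apply: eq_bigr => w _.
rewrite -(sum_ind (X w) (P w * h (X w))); apply: eq_bigr => a _.
by case: eqP => [->|_]; rewrite ?mulr1 ?mul1r ?mulr0 ?mul0r.
Qed.

Lemma pr_ge0 (A : finType) (X : Omega -> A) a : 0 <= pr P X a.
Proof. by apply: sumr_ge0 => w _; exact: P_ge0. Qed.

Lemma pr_geP (A : finType) (X : Omega -> A) w : P w <= pr P X (X w).
Proof.
rewrite /pr (bigD1 w) //= lerDl; apply: sumr_ge0 => ? _; exact: P_ge0.
Qed.

Lemma pr_le1 (A : finType) (X : Omega -> A) a : pr P X a <= 1.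
Proof.
rewrite -HP.2 pr_indic; apply: ler_sum => w _.
rewrite -{2}(mulr1 (P w)); apply: ler_wpM2l; first exact: P_ge0.
by case: eqP; rewrite ?ler01.
Qed.

Lemma ln2_gt0 : 0 < ln (2 : R).
Proof. by apply: ln_gt0; rewrite ltr1n. Qed.

Lemma HOmega (A : finType) (X : Omega -> A) :
  entropy P X = - (\sum_w P w * ln (pr P X (X w))) / ln 2.
Proof.
rewrite /entropy mulNr mulr_suml.
under [X in _ = - X]eq_bigr do rewrite -mulrA.
rewrite -(fiber X (fun a => ln (pr P X a) / ln 2)).
congr (- _); rewrite big_mkcond; apply: eq_bigr => a _.
rewrite /log2 mulrA; case: ifP => // /negbT.
by rewrite lt_def negb_and pr_ge0 orbF negbK => /eqP ->; rewrite !mul0r.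
Qed.

Lemma H_mono (A B : finType) (U : Omega -> A) (V : Omega -> B) :
  (forall w w', U w = U w' -> V w = V w') -> entropy P V <= entropy P U.
Proof.
move=> hUV; rewrite !HOmega !mulNr lerN2 ler_pM2r ?invr_gt0 ?ln2_gt0 //.
apply: ler_sum => w _.
have [->|Pw] := eqVneq (P w) 0; first by rewrite !mul0r.
have P0 : 0 < P w by rewrite lt_def Pw P_ge0.
apply: ler_wpM2l; first exact: ltW.
have hU : 0 < pr P U (U w) by apply: lt_le_trans P0 (pr_geP _ _).
rewrite ler_ln ?posrE //; last by apply: lt_le_trans P0 (pr_geP _ _).
rewrite !pr_indic; apply: ler_sum => w' _; apply: ler_wpM2l; first exact: P_ge0.
case: (eqVneq (U w') (U w)) => [/hUV ->|_]; first by rewrite eqxx.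
by case: eqP; rewrite ?ler01.
Qed.

Lemma H_eq (A B : finType) (U : Omega -> A) (V : Omega -> B) :
  (forall w w', U w = U w' <-> V w = V w') -> entropy P U = entropy P V.
Proof.
move=> h; apply/le_anti; rewrite !H_mono // => w w'; by move/h.
Qed.

Lemma H_ge0 (A : finType) (X : Omega -> A) : 0 <= entropy P X.
Proof.
rewrite HOmega mulNr oppr_ge0 pmulr_lle0 ?invr_gt0 ?ln2_gt0 //.
apply: sumr_le0 => w _; apply: mulr_ge0_le0; first exact: P_ge0.
by apply: ln_le0; apply: pr_le1.
Qed.

Lemma H_const (A : finType) (c : A) : entropy P (fun _ => c) = 0.
Proof.
rewrite HOmega big1 ?oppr0 ?mul0r // => w _.
have -> : pr P (fun _ => c) c = 1.
  by rewrite pr_indic -[RHS]HP.2; apply: eq_bigr => ? _; rewrite eqxx mulr1.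
by rewrite ln1 mulr0.
Qed.

Lemma same_dist_H (A B : finType) (X Y : Omega -> A) (g : A -> B) :
  same_dist P X Y -> entropy P (fun w => g (X w)) = entropy P (fun w => g (Y w)).
Proof.
move=> hs.
have E : forall b, pr P (fun w => g (X w)) b = pr P (fun w => g (Y w)) b.
  move=> b; rewrite !pr_indic.
  rewrite -(fiber X (fun a => (g a == b)%:R)) -(fiber Y (fun a => (g a == b)%:R)).
  by apply: eq_bigr => a _; rewrite hs.
by rewrite /entropy; congr (- _); apply: eq_big => b; rewrite E.
Qed.


Lemma marg (A C : finType) (X : Omega -> A) (Z : Omega -> C) c :
  \sum_a pr P (fun w => (X w, Z w)) (a, c) = pr P Z c.
Proof.
under eq_bigr do rewrite pr_indic.
rewrite exchange_big [RHS]pr_indic; apply: eq_bigr => w _ /=.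
rewrite -(sum_ind (X w) (P w * (Z w == c)%:R)); apply: eq_bigr => a _.
rewrite xpair_eqE.
by case: (X w == a); case: (Z w == c); rewrite /= ?mulr1 ?mulr0 ?mul1r ?mul0r.
Qed.

Lemma sum_pr (A : finType) (X : Omega -> A) : \sum_a pr P X a = 1.
Proof.
rewrite -[RHS]HP.2; transitivity (\sum_a pr P X a * 1).
  by apply: eq_bigr => a _; rewrite mulr1.
by rewrite fiber; apply: eq_bigr => w _; rewrite mulr1.
Qed.

Lemma ln_le_sub1 (x : R) : 0 < x -> ln x <= x - 1.
Proof.
move=> x0; have := @le_ln1Dx R (x - 1).
have -> : 1 + (x - 1) = x by lra.
by apply; lra.
Qed.

Lemma H_submod (A B C : finType) (X : Omega -> A) (Y : Omega -> B) (Z : Omega -> C) :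
  entropy P (fun w => (X w, Y w, Z w)) + entropy P Z <=
  entropy P (fun w => (X w, Z w)) + entropy P (fun w => (Y w, Z w)).
Proof.
set V := fun w => (X w, Y w, Z w).
set XZ := fun w => (X w, Z w).
set YZ := fun w => (Y w, Z w).
set g := fun v : (A * B) * C => pr P XZ (v.1.1, v.2) * pr P YZ (v.1.2, v.2) / pr P Z v.2.
have g0 : forall v, 0 <= g v.
  move=> v; rewrite /g; apply: mulr_ge0; last by rewrite invr_ge0 pr_ge0.
  by apply: mulr_ge0; apply: pr_ge0.
have key : \sum_w P w * ln (pr P XZ (XZ w)) + \sum_w P w * ln (pr P YZ (YZ w))
   - (\sum_w P w * ln (pr P V (V w)) + \sum_w P w * ln (pr P Z (Z w))) <= 0.
  rewrite -!big_split -sumrB /=.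
  apply: (@le_trans _ _ (\sum_w (P w * (g (V w) / pr P V (V w)) - P w))).
    apply: ler_sum => w _.
    have [->|Pw] := eqVneq (P w) 0; first by rewrite !mul0r !addr0 subrr.
    have P0 : 0 < P w by rewrite lt_def Pw P_ge0.
    have p1 : 0 < pr P V (V w) by apply: lt_le_trans P0 (pr_geP _ _).
    have p2 : 0 < pr P Z (Z w) by apply: lt_le_trans P0 (pr_geP _ _).
    have p3 : 0 < pr P XZ (XZ w) by apply: lt_le_trans P0 (pr_geP _ _).
    have p4 : 0 < pr P YZ (YZ w) by apply: lt_le_trans P0 (pr_geP _ _).
    have -> : g (V w) / pr P V (V w) =
       pr P XZ (XZ w) * pr P YZ (YZ w) / pr P Z (Z w) / pr P V (V w) by [].
    set q := pr P XZ (XZ w) * pr P YZ (YZ w) / pr P Z (Z w) / pr P V (V w).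
    have q0 : 0 < q by rewrite /q !divr_gt0 // mulr_gt0.
    have lq : ln q = ln (pr P XZ (XZ w)) + ln (pr P YZ (YZ w)) - (ln (pr P V (V w)) + ln (pr P Z (Z w))).
      rewrite /q ln_div ?posrE ?divr_gt0 ?mulr_gt0 // ln_div ?posrE ?mulr_gt0 //.
      rewrite lnM ?posrE //; lra.
    rewrite -!mulrDr -mulrN -mulrDr -lq -[X in _ <= _ - X]mulr1 -mulrBr.
    by apply: ler_wpM2l; [exact: ltW | exact: ln_le_sub1].
  rewrite sumrB HP.2 subr_le0.
  rewrite -(fiber V (fun v => g v / pr P V v)).
  apply: (@le_trans _ _ (\sum_v g v)).
    apply: ler_sum => v _.
    have [->|pv] := eqVneq (pr P V v) 0; first by rewrite mul0r.
    by rewrite mulrC divfK.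
  rewrite le_eqVlt; apply/orP; left; apply/eqP.
  transitivity (\sum_(ab : A * B) \sum_c g (ab, c)); first by rewrite pair_bigA.
  rewrite exchange_big /= -(sum_pr Z).
  apply: eq_bigr => c _.
  transitivity (\sum_a \sum_b g ((a, b), c)); first by rewrite pair_bigA.
  transitivity ((\sum_a pr P XZ (a, c)) * (\sum_b pr P YZ (b, c)) / pr P Z c).
    rewrite mulr_suml mulr_suml; apply: eq_bigr => a _.
    rewrite mulr_sumr mulr_suml; apply: eq_bigr => b _; by [].
  rewrite !marg.
  have [->|pz] := eqVneq (pr P Z c) 0; first by rewrite !mul0r.
  by rewrite mulfK.
rewrite !HOmega // -!mulrDl ler_pM2r ?invr_gt0 ?ln2_gt0 //.
lra.
Qed.

Lemma ln_prod (I : finType) (F : I -> R) :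
  (forall i, 0 < F i) -> ln (\prod_i F i) = \sum_i ln (F i).
Proof.
move=> h.
have : 0 < \prod_i F i /\ ln (\prod_i F i) = \sum_i ln (F i).
  apply: (big_ind2 (fun x y => 0 < x /\ ln x = y)).
  - by split; [exact: ltr01 | exact: ln1].
  - move=> x1 x2 y1 y2 [hx ex] [hy ey]; split; first exact: mulr_gt0.
    by rewrite lnM ?posrE // ex ey.
  - by move=> i _; split.
by case.
Qed.

Lemma H_indep (K L : nat) (W : Omega -> {ffun 'I_K -> L.-tuple bool}) :
  messages_ok P W -> entropy P W = \sum_k entropy P (fun w => W w k).
Proof.
case=> _ [_ hprod].
rewrite HOmega.
under [RHS]eq_bigr do rewrite HOmega.
rewrite -mulr_suml sumrN; congr (- _ * _).
rewrite exchange_big /=; apply: eq_bigr => w _.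
rewrite -mulr_sumr.
have [->|Pw] := eqVneq (P w) 0; first by rewrite !mul0r.
have P0 : 0 < P w by rewrite lt_def Pw P_ge0.
congr (_ * _); rewrite hprod ln_prod // => k.
by apply: lt_le_trans P0 (pr_geP _ _).
Qed.

Lemma H_subadd (A B : finType) (X : Omega -> A) (Y : Omega -> B) :
  entropy P (fun w => (X w, Y w)) <= entropy P X + entropy P Y.
Proof.
have := H_submod X Y (fun _ => tt).
rewrite H_const addr0.
rewrite (@H_eq _ _ (fun w => (X w, Y w, tt)) (fun w => (X w, Y w))); last first.
  by move=> w w'; split => [[-> ->]|[-> ->]].
rewrite (@H_eq _ _ (fun w => (X w, tt)) X); last by move=> w w'; split => [[->]|->].
by rewrite (@H_eq _ _ (fun w => (Y w, tt)) Y); last by move=> w w'; split => [[->]|->].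
Qed.

Lemma cond_ge0 (A B : finType) (X : Omega -> A) (Z : Omega -> B) :
  0 <= cond_entropy P X Z.
Proof.
rewrite /cond_entropy subr_ge0; apply: H_mono => w w'; by case.
Qed.

Lemma cond_const (A : finType) (X : Omega -> A) :
  cond_entropy P X (fun _ => tt) = entropy P X.
Proof.
rewrite /cond_entropy H_const subr0.
by apply: H_eq => w w'; split => [[->]|->].
Qed.

Lemma cond_mono (A B C : finType) (X : Omega -> A) (Z : Omega -> B) (Z' : Omega -> C) :
  (forall w w', Z' w = Z' w' -> Z w = Z w') ->
  cond_entropy P X Z' <= cond_entropy P X Z.
Proof.
move=> h; have := H_submod X Z' Z.
rewrite (@H_eq _ _ (fun w => (X w, Z' w, Z w)) (fun w => (X w, Z' w))); last first.
  by move=> w w'; split => [[-> -> _]|[E1 E2]]; rewrite ?E1 ?E2 ?(h _ _ E2).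
rewrite (@H_eq _ _ (fun w => (Z' w, Z w)) Z'); last first.
  by move=> w w'; split => [[->]|E]; rewrite ?E ?(h _ _ E).
rewrite /cond_entropy; lra.
Qed.

Definition fam (I T : finType) (X : I -> Omega -> T) (J : {set I}) :
  Omega -> {ffun I -> option T} :=
  fun w => [ffun i => if i \in J then Some (X i w) else None].

Lemma fam_eq (I T : finType) (X : I -> Omega -> T) (J : {set I}) w w' :
  fam X J w = fam X J w' <-> (forall i, i \in J -> X i w = X i w').
Proof.
split.
  move=> /ffunP h i iJ; have := h i; rewrite !ffunE iJ; by case.
move=> h; apply/ffunP => i; rewrite !ffunE; case: ifP => // iJ.
by rewrite h.
Qed.

Lemma fam_sub (I T C : finType) (X : I -> Omega -> T) (Z : Omega -> C) (J : {set I}) :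
  cond_entropy P (fam X J) Z <= \sum_(i in J) cond_entropy P (X i) Z.
Proof.
move: {2}#|J| (erefl #|J|) => n; elim: n J => [|n IH] J hJ.
  have -> : J = finset.set0 by apply/eqP; rewrite -cards_eq0 hJ.
  rewrite big_set0 /cond_entropy subr_le0 le_eqVlt; apply/orP; left; apply/eqP.
  apply: H_eq => w w'; split => [[_ ->]//|->].
  by congr (_, _); apply/fam_eq => i; rewrite finset.in_set0.
have [j jJ] : exists j, j \in J.
  by apply/finset.set0Pn; rewrite -card_gt0 hJ.
rewrite (big_setD1 j jJ) /=.
have hJ' : #|J :\ j| = n by move: hJ; rewrite (cardsD1 j) jJ add1n => -[].
have IH' := IH (J :\ j) hJ'.
have sm := H_submod (X j) (fam X (J :\ j)) Z.
have e : entropy P (fun w => (fam X J w, Z w)) =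
         entropy P (fun w => (X j w, fam X (J :\ j) w, Z w)).
  apply: H_eq => w w'; split.
    move=> [/fam_eq hf hz]; rewrite (hf j jJ) hz; congr (_, _, _).
    by apply/fam_eq => i; rewrite in_setD1 => /andP [_ iJ]; exact: hf.
  move=> [hj /fam_eq hf hz]; rewrite hz; congr (_, _); apply/fam_eq => i iJ.
  by case: (eqVneq i j) => [->//|ne]; apply: hf; rewrite in_setD1 ne iJ.
move: IH'; rewrite /cond_entropy e; lra.
Qed.
Lemma key (MT QT' QsT AT' JT : finType) (Wv : Omega -> MT) (Qv : Omega -> QT')
  (Qs : Omega -> QsT) (As : Omega -> AT') (Wj : Omega -> JT) (f : QsT -> MT -> AT') :
  entropy P (fun w => (Qv w, Wv w)) = entropy P Qv + entropy P Wv ->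
  (forall w w', Qv w = Qv w' -> Qs w = Qs w') ->
  (forall w w', Wv w = Wv w' -> Wj w = Wj w') ->
  (forall w, As w = f (Qs w) (Wv w)) ->
  cond_entropy P As (fun w => (Wj w, Qs w)) <=
  cond_entropy P As (fun w => (Wj w, Qv w)).
Proof.
move=> hI hQ hW hA.
have i1 := H_submod Qv Wv (fun w => (As w, (Wj w, Qs w))).
have ea : entropy P (fun w => (Qv w, Wv w, (As w, (Wj w, Qs w)))) =
          entropy P (fun w => (Qv w, Wv w)).
  apply: H_eq => w w'; split => [[-> -> _]//|[E1 E2]].
  by rewrite E1 E2 !hA (hQ _ _ E1) E2 (hW _ _ E2).
have eb : entropy P (fun w => (Qv w, (As w, (Wj w, Qs w)))) =
          entropy P (fun w => (As w, (Wj w, Qv w))).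
  apply: H_eq => w w'; split => [[E1 E2 E3 _]|[E2 E3 E1]].
    by rewrite E1 E2 E3.
  by rewrite E1 E2 E3 (hQ _ _ E1).
have ec : entropy P (fun w => (Wv w, (As w, (Wj w, Qs w)))) =
          entropy P (fun w => (Wv w, Qs w)).
  apply: H_eq => w w'; split => [[E1 _ _ E2]|[E1 E2]].
    by rewrite E1 E2.
  by rewrite E1 E2 !hA E1 E2 (hW _ _ E1).
have i2 := H_submod Wv Qs Wj.
have ed : entropy P (fun w => (Wv w, Qs w, Wj w)) = entropy P (fun w => (Wv w, Qs w)).
  apply: H_eq => w w'; split => [[E1 E2 _]|[E1 E2]]; first by rewrite E1 E2.
  by rewrite E1 E2 (hW _ _ E1).
have ee : entropy P (fun w => (Wv w, Wj w)) = entropy P Wv.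
  apply: H_eq => w w'; split => [[E1 _]//|E1].
  by rewrite E1 (hW _ _ E1).
have ef : entropy P (fun w => (Qs w, Wj w)) = entropy P (fun w => (Wj w, Qs w)).
  by apply: H_eq => w w'; split => [[E1 E2]|[E1 E2]]; rewrite E1 E2.
have i3 := H_subadd Qv Wj.
have eg : entropy P (fun w => (Wj w, Qv w)) = entropy P (fun w => (Qv w, Wj w)).
  by apply: H_eq => w w'; split => [[E1 E2]|[E1 E2]]; rewrite E1 E2.
move: i1 i2 i3; rewrite ea eb ec ed ee ef /cond_entropy eg hI; lra.
Qed.

End Basic.

Section Scheme.
Variables (R : realType) (Omega : finType) (P : Omega -> R) (K L S : nat)
  (W : Omega -> {ffun 'I_K -> L.-tuple bool}) (QT AT : finType)
  (Q : 'I_K -> Omega -> {ffun 'I_S -> QT})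
  (A : 'I_K -> Omega -> {ffun 'I_S -> AT}).
Hypothesis HM : messages_ok P W.
Hypothesis HS : mupir_scheme P W Q A.

Let HP : is_prob P := HM.1.

Definition WJ (J : {set 'I_K}) := fam (fun i w => W w i) J.
Definition FF k J := cond_entropy P (A k) (fun w => (WJ J w, Q k w)).

Lemma FF_ge0 k (J : {set 'I_K}) : 0 <= FF k J.
Proof. exact: cond_ge0. Qed.

Lemma WJ_eq (J : {set 'I_K}) w w' : W w = W w' -> WJ J w = WJ J w'.
Proof. by move=> E; apply/fam_eq => i _; rewrite E. Qed.

Lemma stepb k (J : {set 'I_K}) : k \notin J -> L%:R + FF k (k |: J) <= FF k J.
Proof.
move=> kJ.
have corr := HS.2.2.2 k.
have mi := HS.2.1 k.
set WJ' := WJ (k |: J).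
have sm1 := H_submod HP (fun w => W w k) (WJ J) (fun w => (A k w, Q k w)).
have e1 : entropy P (fun w => (A k w, (WJ' w, Q k w))) =
          entropy P (fun w => (W w k, WJ J w, (A k w, Q k w))).
  apply: H_eq => // w w'; split.
    move=> [E1 /fam_eq E2 E3]; rewrite E1 E3 (E2 k) ?setU11 //; congr (_, _, _).
    by apply/fam_eq => i iJ; apply: E2; rewrite setU1r.
  move=> [E1 /fam_eq E2 E3 E4]; rewrite E3 E4; congr (_, (_, _)).
  apply/fam_eq => i; rewrite in_setU1 => /orP [/eqP ->//|iJ]; exact: E2.
have e2 : entropy P (fun w => (WJ J w, (A k w, Q k w))) =
          entropy P (fun w => (A k w, (WJ J w, Q k w))).
  by apply: H_eq => // w w'; split => [[E1 E2 E3]|[E1 E2 E3]]; rewrite E1 E2 E3.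
set Wmk := WJ [set~ k].
have sm2 := H_submod HP (fun w => W w k) Wmk (fun w => (WJ J w, Q k w)).
have e3 : entropy P (fun w => (W w k, Wmk w, (WJ J w, Q k w))) =
          entropy P (fun w => (Q k w, W w)).
  apply: H_eq => // w w'; split.
    move=> [E1 /fam_eq E2 _ E4]; rewrite E4; congr (_, _).
    apply/ffunP => i; case: (eqVneq i k) => [->//|ne]; apply: E2 (i) _ .
    by rewrite in_setC1.
  move=> [E1 E2]; rewrite E1 E2 (WJ_eq _ E2).
  by have -> : Wmk w = Wmk w' by apply: WJ_eq.
have e4 : entropy P (fun w => (W w k, (WJ J w, Q k w))) =
          entropy P (fun w => (WJ' w, Q k w)).
  apply: H_eq => // w w'; split.
    move=> [E1 /fam_eq E2 E3]; rewrite E3; congr (_, _).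
    apply/fam_eq => i; rewrite in_setU1 => /orP [/eqP ->//|iJ]; exact: E2.
  move=> [/fam_eq E2 E3]; rewrite E3 (E2 k) ?setU11 //; congr (_, (_, _)).
  by apply/fam_eq => i iJ; apply: E2; rewrite setU1r.
have e5 : entropy P (fun w => (Wmk w, (WJ J w, Q k w))) =
          entropy P (fun w => (Wmk w, Q k w)).
  apply: H_eq => // w w'; split => [[E1 _ E3]|[/fam_eq E1 E3]]; first by rewrite E1 E3.
  rewrite E3; congr (_, (_, _)); first by apply/fam_eq.
  apply/fam_eq => i iJ; apply: E1; rewrite in_setC1.
  by apply: contraNneq kJ => <-.
have e6 := H_subadd HP Wmk (Q k).
have e8 := H_indep HP HM.
have e9 := fam_sub HP (fun i w => W w i) (fun _ => tt) [set~ k].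
have {}e9 : entropy P Wmk <= \sum_(i in [set~ k]) entropy P (fun w => W w i).
  rewrite cond_const // in e9; apply: le_trans e9 _.
  by apply: ler_sum => i _; rewrite cond_const.
have e10 : \sum_k0 entropy P (fun w => W w k0) =
    entropy P (fun w => W w k) + \sum_(i in [set~ k]) entropy P (fun w => W w i).
  rewrite (bigD1 k) //=; congr (_ + _); apply: eq_bigl => i; by rewrite in_setC1.
have e11 := HM.2.1 k.
move: corr mi sm1 sm2 e6 e9; rewrite /FF /cond_entropy /mutual_info e1 e2 e3 e4 e5.
rewrite e8 e10 e11 -/Wmk.
lra.
Qed.

Lemma stepc k k' (J : {set 'I_K}) : FF k' J <= S%:R * FF k J.
Proof.
have [ans hans] := HS.1.
have mi : forall k0, entropy P (fun w => (Q k0 w, W w)) = entropy P (Q k0) + entropy P W.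
  move=> k0; have := HS.2.1 k0; rewrite /mutual_info; lra.
have hc1 : forall k0 s,
    cond_entropy P (fun w => A k0 w s) (fun w => (WJ J w, Q k0 w s)) <=
    cond_entropy P (fun w => A k0 w s) (fun w => (WJ J w, Q k0 w)).
  move=> k0 s.
  apply: (@key R Omega P HP _ _ _ _ _ W (Q k0) (fun w => Q k0 w s)
                (fun w => A k0 w s) (WJ J) (ans s)).
  - exact: mi.
  - by move=> w w' ->.
  - exact: WJ_eq.
  - move=> w; exact: hans.
have hc2 : forall s,
    cond_entropy P (fun w => A k w s) (fun w => (WJ J w, Q k w)) <= FF k J.
  move=> s; rewrite /FF /cond_entropy lerD2r.
  by apply: H_mono => // w w' [E1 E2 E3]; rewrite E1 E2 E3.
have hc3 : forall s,
    cond_entropy P (fun w => A k w s) (fun w => (WJ J w, Q k w s)) =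
    cond_entropy P (fun w => A k' w s) (fun w => (WJ J w, Q k' w s)).
  move=> s; have hsd := HS.2.2.1 s k k'.
  pose wj := fun m : {ffun 'I_K -> L.-tuple bool} =>
    [ffun i => if i \in J then Some (m i) else None].
  rewrite /cond_entropy; congr (_ - _).
    exact: (same_dist_H (fun t => (t.1.2, (wj t.2, t.1.1))) hsd).
  exact: (same_dist_H (fun t => (wj t.2, t.1.1)) hsd).
have hc4 : forall s,
    cond_entropy P (fun w => A k' w s) (fun w => (WJ J w, Q k' w)) <=
    cond_entropy P (fun w => A k' w s) (fun w => (WJ J w, Q k' w s)).
  by move=> s; apply: cond_mono => // w w' [E1 E2]; rewrite E1 E2.
have hc5 : FF k' J <= \sum_(s < S)
    cond_entropy P (fun w => A k' w s) (fun w => (WJ J w, Q k' w)).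
  have := fam_sub HP (fun s w => A k' w s) (fun w => (WJ J w, Q k' w)) [set: 'I_S].
  have -> : cond_entropy P (fam (fun s w => A k' w s) [set: 'I_S])
      (fun w => (WJ J w, Q k' w)) = FF k' J.
    rewrite /FF /cond_entropy; congr (_ - _); apply: H_eq => // w w'.
    split => [[/fam_eq E1 E2 E3]|[E1 E2 E3]].
      rewrite E2 E3; congr (_, _); apply/ffunP => s; exact: E1.
    by rewrite E2 E3; congr (_, _); apply/fam_eq => s _; rewrite E1.
  move=> h; apply: le_trans h _; rewrite le_eqVlt; apply/orP; left; apply/eqP.
  by apply: eq_bigl => s; rewrite finset.in_setT.
have -> : S%:R * FF k J = \sum_(s < S) FF k J.
  by rewrite sumr_const card_ord mulr_natl.
apply: le_trans hc5 _; apply: ler_sum => s _.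
apply: le_trans (hc4 s) _; rewrite -hc3; apply: le_trans (hc1 k s) _.
exact: hc2.
Qed.

End Scheme.
Section Final.
Variables (R : realType) (Omega : finType) (P : Omega -> R) (K L S : nat)
  (W : Omega -> {ffun 'I_K -> L.-tuple bool}) (QT AT : finType)
  (Q : 'I_K -> Omega -> {ffun 'I_S -> QT})
  (A : 'I_K -> Omega -> {ffun 'I_S -> AT}).
Hypothesis HM : messages_ok P W.
Hypothesis HS : mupir_scheme P W Q A.

Let HP : is_prob P := HM.1.

Lemma stepa theta :
  FF P W Q A theta finset.set0 <=
  \sum_(s < S) cond_entropy P (fun w => A theta w s) (Q theta).
Proof.
have := fam_sub HP (fun s w => A theta w s) (Q theta) [set: 'I_S].
have -> : cond_entropy P (fam (fun s w => A theta w s) [set: 'I_S]) (Q theta) =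
          FF P W Q A theta finset.set0.
  rewrite /FF /cond_entropy; congr (_ - _); apply: H_eq => // w w'.
    split => [[/fam_eq E1 E2]|[E1 _ E2]].
      rewrite E2; congr (_, (_, _)); first by apply/ffunP => s; exact: E1.
      by apply/fam_eq => i; rewrite finset.in_set0.
    by rewrite E2; congr (_, _); apply/fam_eq => s _; rewrite E1.
  split => [E|[_ E]] //; rewrite E; congr (_, _).
  by apply/fam_eq => i; rewrite finset.in_set0.
move=> h; apply: le_trans h _; rewrite le_eqVlt; apply/orP; left; apply/eqP.
by apply: eq_bigl => s; rewrite finset.in_setT.
Qed.

Lemma main_ind (Spos : (0 < S)%N) n : forall (J : {set 'I_K}) k,
  #|~: J| = n.+1 -> k \notin J ->
  L%:R * \sum_(i < n.+1) ((S%:R : R) ^- i) <= FF P W Q A k J.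
Proof.
have S0 : (0 : R) < S%:R by rewrite ltr0n.
elim: n => [|n IH] J k hc hk.
  rewrite big_ord1 expr0 invr1 mulr1.
  have := stepb HM HS hk; have := FF_ge0 Q A HM k (k |: J); lra.
have hc' : #|~: (k |: J)| = n.+1.
  have h1 := cardsC (k |: J); have h2 := cardsC J.
  rewrite cardsU1 hk add1n in h1; lia.
have /finset.set0Pn [k' hk'] : ~: (k |: J) != finset.set0 by rewrite -card_gt0 hc'.
rewrite finset.in_setC in hk'.
have ih := IH (k |: J) k' hc' hk'.
have sc := stepc HM HS k k' (k |: J).
have sb := stepb HM HS hk.
set T := \sum_(i < n.+1) ((S%:R : R) ^- i).
have eT : \sum_(i < n.+2) ((S%:R : R) ^- i) = 1 + T / S%:R.
  rewrite big_ord_recl expr0 invr1; congr (_ + _); rewrite /T mulr_suml.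
  by apply: eq_bigr => i _; rewrite /= exprS invfM mulrC.
have hx : L%:R * T / S%:R <= FF P W Q A k (k |: J).
  rewrite ler_pdivrMr //; apply: le_trans ih _; by rewrite mulrC.
rewrite eT mulrDr mulr1 mulrA; lra.
Qed.

End Final.

Unset Implicit Arguments.
Set Strict Implicit.

Theorem lemma1 (R : realType) (Omega : finType) (P : Omega -> R)
  (N U K L : nat) (W : Omega -> {ffun 'I_K -> L.-tuple bool}) :
  (0 < N)%N -> (0 < U)%N ->
  messages_ok P W ->
  (* private retrieval is possible *)
  (exists (QT AT : finType)
          (Q : 'I_K -> Omega -> {ffun 'I_(N + U - 1) -> QT})
          (A : 'I_K -> Omega -> {ffun 'I_(N + U - 1) -> AT}),
      mupir_scheme P W Q A) /\
  (* and every private scheme obeys the rate bound *)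
  (forall (QT AT : finType)
          (Q : 'I_K -> Omega -> {ffun 'I_(N + U - 1) -> QT})
          (A : 'I_K -> Omega -> {ffun 'I_(N + U - 1) -> AT}),
      mupir_scheme P W Q A ->
      forall theta : 'I_K,
        mupir_rate P L Q A theta <=
        (\sum_(i < K) ((N + U - 1)%:R : R) ^- i)^-1).
Proof.
move=> N0 U0 HM.
have HP : is_prob P := HM.1.
have S0 : (0 < N + U - 1)%N by lia.
split.
  exists unit, {ffun 'I_K -> L.-tuple bool},
    (fun k w => [ffun _ : 'I_(N + U - 1) => tt]),
    (fun k w => [ffun _ : 'I_(N + U - 1) => W w]).
  split; first by exists (fun s q m => m) => k w s; rewrite ffunE.
  split.
    move=> k; rewrite /mutual_info H_const // add0r.
    rewrite (@H_eq _ _ _ HP _ _ (fun w => ([ffun _ : 'I_(N + U - 1) => tt], W w)) W) ?subrr //.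
    by move=> w w'; split => [[->]|->].
  split; first by move=> s k k' a.
  move=> k; rewrite /cond_entropy; apply/eqP; rewrite subr_eq0; apply/eqP.
  apply: H_eq => // w w'; split => [/(congr1 snd) //|E].
  rewrite -E; congr (_, _).
  have := congr1 (fun f : {ffun 'I_(N + U - 1) -> {ffun 'I_K -> L.-tuple bool}} =>
                    f (Ordinal S0)) (congr1 fst E).
  by rewrite /= !ffunE => ->.
move=> QT AT Q A HS theta.
have [n hn] : exists n, K = n.+1.
  exists K.-1; have := ltn_ord theta; lia.
have hK : #|~: (finset.set0 : {set 'I_K})| = n.+1.
  by rewrite finset.setC0 cardsT card_ord.
have th0 : theta \notin (finset.set0 : {set 'I_K}) by rewrite finset.in_set0.
have mi := main_ind HM HS S0 hK th0.
have sa := stepa Q A HM theta.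
have F0 := FF_ge0 Q A HM theta finset.set0.
move: sa; rewrite /mupir_rate.
set D := \sum_(s < N + U - 1) _.
set c := \sum_(i < K) _.
move=> sa.
have ec : c = \sum_(i < n.+1) ((N + U - 1)%:R : R) ^- i.
  have gen : forall m (F : nat -> R), m = n.+1 ->
      \sum_(i < m) F i = \sum_(i < n.+1) F i by move=> m F ->.
  exact: (gen K (fun i => ((N + U - 1)%:R : R) ^- i) hn).
rewrite -ec in mi.
have c1 : 1 <= c.
  rewrite ec big_ord_recl expr0 invr1 lerDl; apply: sumr_ge0 => i _.
  by rewrite invr_ge0 exprn_ge0 // ler0n.
clearbody c D.
have c0 : 0 < c by lra.
have [D0|Dn0] := eqVneq D 0.
  by rewrite D0 invr0 mulr0 invr_ge0; lra.
have Dp : 0 < D by rewrite lt_def Dn0 /=; lra.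
rewrite ler_pdivrMr // -(ler_pM2l c0) mulrA mulfV ?gt_eqF // mul1r.
have L0 : (0 : R) <= L%:R by rewrite ler0n.
nra.
Qed.
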